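(* Let $g:[0,1]^n\rightarrow\mathbb{R}$ be twice continuously differentiable (on an open neighborhood of $[0,1]^n$), and for $\boldsymbol{w}\in[0,1]^n$ let $H(\boldsymbol{w})$ denote the Hessian of $g$ at $\boldsymbol{w}$. Let $$K := \max_{\boldsymbol{w}\in[0,1]^n,\ i\in[n]} \Big|\sum_{j\neq i} H_{ij}(\boldsymbol{w})\Big|.$$ Then for every $i\in[n]$, $$\left|\int_{0}^1 \frac{\partial g}{\partial w_i}(t\mathbf{1})\, dt - \big(g(\mathbf{1}_i) - g(\mathbf{0})\big)\right| \le \frac{K}{2},$$ where $\mathbf{1}\in\mathbb{R}^n$ is the all-ones vector, $\mathbf{0}$ is the zero vector, and $\mathbf{1}_i$ is the $i$-th standard basis vector of $\mathbb{R}^n$.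
   Context: $[n]=\{1,\dots,n\}$. The quantity $\int_0^1 \frac{\partial g}{\partial w_i}(t\mathbf{1})\,dt$ is the (path) integrated-gradients attribution of feature $i$ along the straight line from $\mathbf{0}$ to $\mathbf{1}$, and $g(\mathbf{1}_i)-g(\mathbf{0})$ is the marginal gain of feature $i$ at the empty set for the set function $G(S)=g(\mathbf{1}_S)$, where $\mathbf{1}_S\in\{0,1\}^n$ is the indicator vector of $S\subseteq[n]$. *)

(* Defs.v *)
From HB Require Import structures.
From mathcomp Require Import all_boot all_order all_algebra.
From mathcomp Require Import all_classical all_reals all_analysis.
Set Implicit Arguments. Unset Strict Implicit. Unset Printing Implicit Defensive.
Import Order.TTheory GRing.Theory Num.Theory.
Import numFieldNormedType.Exports.
Local Open Scope classical_set_scope.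
Local Open Scope ring_scope.

Definition basis_vec (R : realType) (n : nat) (i : 'I_n) : 'rV[R]_n :=
  delta_mx 0 i.

Definition ones (R : realType) (n : nat) : 'rV[R]_n := const_mx 1.

Definition partial (R : realType) (n : nat) (i : 'I_n)
  (f : 'rV[R]_n -> R) : 'rV[R]_n -> R :=
  fun w => 'D_(@basis_vec R n i) f w.

Definition hessian (R : realType) (n : nat) (f : 'rV[R]_n -> R)
  (i j : 'I_n) (w : 'rV[R]_n) : R :=
  partial j (partial i f) w.

Definition unit_cube (R : realType) (n : nat) : set 'rV[R]_n :=
  [set w | forall k : 'I_n, 0 <= w 0 k <= 1].

Definition C2_on (R : realType) (n : nat) (U : set 'rV[R]_n)
  (f : 'rV[R]_n -> R) : Prop :=
  [/\ forall w, U w -> forall i : 'I_n, derivable f w (@basis_vec R n i),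
      forall w, U w -> forall i j : 'I_n,
        derivable (partial i f) w (@basis_vec R n j) &
      forall (i j : 'I_n) w, U w -> {for w, continuous (hessian f i j)}].

Definition Kconst (R : realType) (n : nat) (f : 'rV[R]_n -> R) : R :=
  sup [set x : R | exists (w : 'rV[R]_n) (i : 'I_n), @unit_cube R n w /\
         x = `| \sum_(j < n | j != i) hessian f i j w | ].

(* Main.v *)
Require Import Defs.
From HB Require Import structures.
From mathcomp Require Import all_boot all_order all_algebra.
From mathcomp Require Import all_classical all_reals all_analysis.
Import Order.TTheory GRing.Theory Num.Theory.
Import numFieldNormedType.Exports.
Local Open Scope classical_set_scope.
Local Open Scope ring_scope.
Section S.
Variables (R : realType) (n : nat).

Lemma line_quot (f : 'rV[R]_n -> R) (p d : 'rV_n) (s : R) :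
  (fun h : R => h^-1 *: ((f \o shift (p + s *: d)) (h *: d) - f (p + s *: d))) =
  (fun h : R => h^-1 *: (((fun t => f (p + t *: d)) \o shift s) (h *: 1) - f (p + s *: d))).
Proof.
apply/funext => h /=; congr (_ *: (f _ - _)).
by rewrite [h *: (1:R)]mulr1 scalerDl addrCA addrA.
Qed.

Lemma line_derive (f : 'rV[R]_n -> R) (p d : 'rV_n) (s : R) :
  derivable f (p + s *: d) d ->
  is_derive s 1 (fun t => f (p + t *: d)) ('D_d f (p + s *: d)).
Proof.
move=> df; split.
  by move: df; rewrite /derivable line_quot.
by rewrite /derive -line_quot.
Qed.
Lemma mv_est (f : 'rV[R]_n -> R) (p d : 'rV_n) (a L eps : R) :
  (forall s : R, `|s| <= `|a| -> derivable f (p + s *: d) d /\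
      `|'D_d f (p + s *: d) - L| <= eps) ->
  `|f (p + a *: d) - f p - a * L| <= eps * `|a|.
Proof.
move=> H.
set psi := fun t => f (p + t *: d).
have Hd : forall x : R, `|x| <= `|a| -> is_derive x 1 psi ('D_d f (p + x *: d)).
  by move=> x /H [dx _]; apply: line_derive.
have f0 : f p = psi 0 by rewrite /psi scale0r addr0.
have key : forall c : R, `|c| <= `|a| -> f (p + a *: d) - f p = 'D_d f (p + c *: d) * a ->
   `|f (p + a *: d) - f p - a * L| <= eps * `|a|.
  move=> c ca ->; rewrite mulrC -mulrBr normrM mulrC ler_wpM2r //.
  by have [_] := H c ca.
have [a0|a0] := leP 0 a.
  have [c cin E] : exists2 c, c \in `[0, a]%R & psi a - psi 0 = 'D_d f (p + c *: d) * (a - 0).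
    apply: MVT_segment => //.
      move=> x; rewrite in_itv /= => /andP[x0 xa]; apply: Hd.
      have ? : 0 <= x by exact: ltW.
      by rewrite !ger0_norm // ltW.
    apply: derivable_within_continuous => x; rewrite in_itv /= => /andP[x0 xa].
    suff hx : `|x| <= `|a| by case: (Hd x hx).
    by rewrite !ger0_norm // (le_trans x0).
  apply: (key c); last by rewrite f0 E subr0.
  by move: cin; rewrite in_itv /= => /andP[c0 ca]; rewrite !ger0_norm // (le_trans c0).
have [c cin E] : exists2 c, c \in `[a, 0]%R & psi 0 - psi a = 'D_d f (p + c *: d) * (0 - a).
  apply: MVT_segment; first exact: ltW.
    move=> x; rewrite in_itv /= => /andP[ax x0]; apply: Hd.
    by rewrite !ltr0_norm // ?lerN2 ?ltW // (lt_trans ax).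
  apply: derivable_within_continuous => x; rewrite in_itv /= => /andP[ax x0].
  suff hx : `|x| <= `|a| by case: (Hd x hx).
  by rewrite (ler0_norm x0) ltr0_norm // lerN2.
apply: (key c).
  by move: cin; rewrite in_itv /= => /andP[ac c0]; rewrite ler0_norm // ltr0_norm // lerN2.
rewrite f0 -[LHS]opprK opprB E sub0r mulrN opprK //.
Qed.
Lemma ball_rV (w y : 'rV[R]_n) (r : R) :
  0 < r -> (forall j, `|y 0 j| < r) -> ball w r (w + y).
Proof.
move=> r0 hy.
split => // i j; rewrite /ball /= mxE ord1 opprD addrA subrr sub0r normrN.
exact: hy.
Qed.
Definition pre (v : 'rV[R]_n) (k : nat) : 'rV[R]_n :=
  \row_j (if (j < k)%N then v 0 j else 0).

Lemma pre0 v : pre v 0 = 0.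
Proof. by apply/rowP => j; rewrite !mxE. Qed.

Lemma pren v : pre v n = v.
Proof. by apply/rowP => j; rewrite !mxE ltn_ord. Qed.

Lemma preS v (k : 'I_n) : pre v k.+1 = pre v k + v 0 k *: @basis_vec R n k.
Proof.
apply/rowP => j; rewrite !mxE /= ltnS leq_eqVlt.
case: (eqVneq j k) => [->|jk] /=; first by rewrite eqxx ltnn mulr1 add0r.
have jk' : (nat_of_ord j == nat_of_ord k) = false.
  by apply/negbTE; move: jk; apply: contra => /eqP/val_inj ->.
by rewrite jk' /= mulr0 addr0.
Qed.

Lemma pre_le v k (j : 'I_n) : `|pre v k 0 j| <= `|v 0 j|.
Proof. by rewrite mxE; case: ifP => // _; rewrite normr0. Qed.

Lemma entry_le_sum (v : 'rV[R]_n) j : `|v 0 j| <= \sum_k `|v 0 k|.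
Proof.
rewrite (bigD1 j) //= lerDl; exact: sumr_ge0.
Qed.

Lemma dir_deriv (f : 'rV[R]_n -> R) (U : set 'rV_n) (w v : 'rV_n) :
  open U -> U w ->
  (forall x, U x -> forall j, derivable f x (@basis_vec R n j)) ->
  (forall j, {for w, continuous (partial j f)}) ->
  is_derive w v f (\sum_j v 0 j * partial j f w).
Proof.
move=> oU Uw df cf.
set L := \sum_j _.
set S := \sum_k `|v 0 k| + 1.
have S0 : 0 < S by rewrite /S ltr_pwDr // sumr_ge0.
suff cv : (fun h : R => h^-1 *: ((f \o shift w) (h *: v) - f w)) @ 0^' --> L.
  have dv : derivable f w v by apply/cvg_ex; exists L.
  by split => //; apply: cvg_lim.
apply/cvgrPdist_le => eps eps0.
set e' := eps / S.
have e'0 : 0 < e' by rewrite divr_gt0.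
have nQ : \forall x \near w, U x /\ forall j, `|partial j f x - partial j f w| <= e'.
  apply: filterI; first by apply: open_nbhs_nbhs; split.

  apply: (@filter_forall _ 'I_n (fun j x => `|partial j f x - partial j f w| <= e') (nbhs w) _) => j.
  have := cf j; move/cvgrPdist_le => /(_ e' e'0).
  by apply: filterS => x; rewrite distrC.
move/nbhs_ballP: nQ => [r /= r0 Hr].
have vS : forall j, `|v 0 j| <= S.
  by move=> j; apply: (le_trans (entry_le_sum v j)); rewrite lerDl.
have rS0 : 0 < r / (2 * S) by rewrite divr_gt0 // mulr_gt0.
near=> h.
have h0 : h != 0 by near: h; exact: nbhs_dnbhs_neq.
have hr : `|h| < r / (2 * S) by near: h; exact: dnbhs0_lt.
have key : forall k : 'I_n,
  `|f (w + h *: pre v k.+1) - f (w + h *: pre v k) - h * v 0 k * partial k f w|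
    <= e' * (`|h| * `|v 0 k|).
  move=> k.
  have -> : w + h *: pre v k.+1 = (w + h *: pre v k) + (h * v 0 k) *: @basis_vec R n k.
    by rewrite preS scalerDr scalerA addrA.
  rewrite -normrM; apply: mv_est => s hs.
  have Bx : ball w r (w + h *: pre v k + s *: @basis_vec R n k).
    rewrite -addrA; apply: ball_rV => // j.
    rewrite !mxE eqxx /=.
    apply: (le_lt_trans (ler_normD _ _)).
    have h1 : `|h * (if (j < k)%N then v 0 j else 0)| <= `|h| * S.
      rewrite normrM ler_wpM2l //; case: ifP => _; last by rewrite normr0 ltW.
      exact: vS.
    have h2 : `|s * (j == k)%:R| <= `|h| * S.
      rewrite normrM; apply: (le_trans (y := `|s|)).
        rewrite -[leRHS]mulr1 ler_wpM2l //; case: (j == k); by rewrite ?normr1 ?normr0.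
      by apply: (le_trans hs); rewrite normrM ler_wpM2l.
    apply: (le_lt_trans (lerD h1 h2)).
    have -> : `|h| * S + `|h| * S = `|h| * (2 * S) by rewrite mulr_natl mulrnAr mulr2n.
    by rewrite -ltr_pdivlMr // mulr_gt0.
  have [Ux Px] := Hr _ Bx.
  by split; [exact: df | exact: Px].
have tel : f (w + h *: v) - f w - h * L = \sum_(k < n)
    (f (w + h *: pre v k.+1) - f (w + h *: pre v k) - h * v 0 k * partial k f w).
  rewrite sumrB.
  rewrite -(big_mkord xpredT (fun k => f (w + h *: pre v k.+1) - f (w + h *: pre v k))).
  rewrite telescope_sumr // pre0 pren scaler0 addr0 /L mulr_sumr.
  by congr (_ - _); apply: eq_bigr => k _; rewrite mulrA.
have bnd : `|f (w + h *: v) - f w - h * L| <= e' * `|h| * S.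
  rewrite tel; apply: (le_trans (ler_norm_sum _ _ _)).
  apply: (le_trans (ler_sum _ (fun k _ => key k))).
  rewrite -mulr_sumr -mulr_sumr -mulrA.
  apply: ler_wpM2l; first exact: ltW.
  by apply: ler_wpM2l => //; rewrite /S lerDl.
rewrite /= [h *: v + w]addrC.
have -> : L - h^-1 *: (f (w + h *: v) - f w) = h^-1 * (h * L - (f (w + h *: v) - f w)).
  by rewrite mulrBr mulKf.
rewrite normrM distrC normfV.
have hp : 0 < `|h| by rewrite normr_gt0.
rewrite -(ler_pM2l hp) mulrA mulfV ?normr_eq0 // mul1r.
apply: (le_trans bnd); rewrite /e' mulrC mulrA.
have -> : S * (eps / S) = eps by rewrite mulrC divfK // gt_eqF.
by rewrite mulrC.
Unshelve. all: by end_near.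
Qed.

Lemma mv_est_pos (f : 'rV[R]_n -> R) (p d : 'rV_n) (a L eps : R) : 0 <= a ->
  (forall s : R, 0 <= s <= a -> derivable f (p + s *: d) d /\
      `|'D_d f (p + s *: d) - L| <= eps) ->
  `|f (p + a *: d) - f p - a * L| <= eps * `|a|.
Proof.
move=> a0 H.
set psi := fun t => f (p + t *: d).
have Hd : forall x : R, 0 <= x <= a -> is_derive x 1 psi ('D_d f (p + x *: d)).
  by move=> x /H [dx _]; apply: line_derive.
have f0 : f p = psi 0 by rewrite /psi scale0r addr0.
have [c cin E] : exists2 c, c \in `[0, a]%R & psi a - psi 0 = 'D_d f (p + c *: d) * (a - 0).
  apply: MVT_segment => //.
    move=> x; rewrite in_itv /= => /andP[x0 xa]; apply: Hd.
    by rewrite !ltW.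
  apply: derivable_within_continuous => x; rewrite in_itv /= => xin.
  by case: (Hd x xin).
move: cin; rewrite in_itv /= => cin.
rewrite f0 E subr0 mulrC -mulrBr normrM mulrC ler_wpM2r //.
by have [_] := H c cin.
Qed.

Lemma line_cont (f : 'rV[R]_n -> R) (p d : 'rV_n) (t : R) :
  derivable f (p + t *: d) d -> {for t, continuous (fun s : R => f (p + s *: d))}.
Proof.
move=> /line_derive [dh _].
by apply/differentiable_continuous/derivable1_diffP.
Qed.

Lemma cont_sum (T : topologicalType) (I : finType) (P : pred I) (F : I -> T -> R) x :
  (forall j, {for x, continuous (F j)}) ->
  {for x, continuous (fun w => \sum_(j | P j) F j w)}.
Proof.
move=> cF.
suff : forall r, {for x, continuous (fun w => \sum_(j <- r | P j) F j w)} by apply.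
elim => [|a r IH].
  have -> : (fun w => \sum_(j <- [::] | P j) F j w) = fun=> 0.
    by apply/funext => w; rewrite big_nil.
  exact: cvg_cst.
have -> : (fun w => \sum_(j <- a :: r | P j) F j w) =
   fun w => (if P a then F a w else 0) + \sum_(j <- r | P j) F j w.
  by apply/funext => w; rewrite big_cons; case: (P a); rewrite ?add0r.
have hA : {for x, continuous (fun w => if P a then F a w else 0)}.
  by case: (P a) => //; exact: cvg_cst.
exact: (continuousD hA IH).
Qed.
Lemma deriv_cont1 (h : R -> R) t : derivable h t 1 -> h z @[z --> t] --> h t.
Proof. by move=> /derivable1_diffP/differentiable_continuous. Qed.
End S.

Theorem lemma1 (R : realType) (n : nat) (g : 'rV[R]_n -> R)
  (U : set 'rV[R]_n) (hU : open U) (hcube : @unit_cube R n `<=` U)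
  (hg : C2_on U g) (i : 'I_n) :
  `| Rintegral lebesgue_measure `[0%R, 1%R]
       (fun t : R => partial i g (t *: @ones R n))
     - (g (@basis_vec R n i) - g 0) | <= Kconst g / 2.
Proof.
case: hg => dg df ch.
set f := partial i g.
set e := @basis_vec R n i.
set o := @ones R n.
set Kc := Kconst g.
have DD : forall w, U w -> forall v, is_derive w v f (\sum_j v 0 j * hessian g i j w).
  move=> w Uw v; exact: (@dir_deriv R n f U w v hU Uw (fun x Ux j => df x Ux i j) (fun j => ch i j w Uw)).
have Kb : forall w, unit_cube w -> `|\sum_(j < n | j != i) hessian g i j w| <= Kc.
  have cc : compact (@unit_cube R n).
    have H0 : compact [set v : 'rV[R]_n | forall k, `[(0:R), 1]%classic (v ord0 k)].
      exact: (rV_compact (fun=> @segment_compact R 0 1)).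
    suff <- : [set v : 'rV[R]_n | forall k, `[(0:R), 1]%classic (v ord0 k)] = @unit_cube R n by [].
    apply/funext => w; apply/propext; split => H k.
      by have := H k; rewrite /= in_itv.
    by rewrite /= in_itv; exact: H.
  pose phi (i' : 'I_n) w := `|\sum_(j < n | j != i') hessian g i' j w|.
  have cT : forall i', has_sup (phi i' @` @unit_cube R n).
    move=> i'; apply: compact_has_sup.
      by exists (phi i' 0), 0 => // k; rewrite mxE lexx ler01.
    apply: continuous_compact => //.
    apply: continuous_in_subspaceT => w; rewrite inE => cw.
    have cs : {for w, continuous (fun w => \sum_(j < n | j != i') hessian g i' j w)}.
      by apply: cont_sum => j; exact: ch (hcube _ cw).
    exact: (cvg_norm cs).
  move=> w cw; rewrite /Kc /Kconst; apply: ub_le_sup; last by exists w, i.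
  exists (\sum_i' sup (phi i' @` @unit_cube R n)) => x [w' [i' [cw' ->]]].
  apply: (le_trans (y := sup (phi i' @` @unit_cube R n))).
    by apply: (ub_le_sup (cT i').2); exists w'.
  rewrite (bigD1 i') //= lerDl sumr_ge0 // => k _.
  apply: (le_trans (y := phi k 0)); first exact: normr_ge0.
  by apply: (ub_le_sup (cT k).2); exists 0 => // l; rewrite mxE lexx ler01.
have cube_o : forall t : R, 0 <= t <= 1 -> unit_cube (0 + t *: o).
  by move=> t t01 k; rewrite add0r !mxE mulr1.
have cube_e : forall t : R, 0 <= t <= 1 -> unit_cube (0 + t *: e).
  move=> t /andP[t0 t1] k; rewrite add0r !mxE /=.
  by case: (k == i); rewrite ?mulr1 ?mulr0 ?t0 ?t1 ?lexx ?ler01.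
have cube_seg : forall t s : R, 0 <= t <= 1 -> 0 <= s <= 1 ->
    unit_cube ((0 + t *: e) + s *: (t *: (o - e))).
  move=> t s /andP[t0 t1] /andP[s0 s1] k; rewrite !mxE /=.
  case: (k == i); rewrite ?mulr1 ?mulr0 ?subrr ?mulr0 ?addr0 ?add0r ?subr0 ?mulr1 ?t0 ?t1 //.
  by rewrite mulr_ge0 //= mulr_ile1.
have cFp : forall t : R, 0 <= t <= 1 -> {for t, continuous (fun t : R => f (0 + t *: o))}.
  move=> t t01; apply: line_cont.
  by have [dd _] := DD _ (hcube _ (cube_o t t01)) o.
have cGp : forall t : R, 0 <= t <= 1 -> {for t, continuous (fun t : R => f (0 + t *: e))}.
  move=> t t01; apply: line_cont.
  exact: (df _ (hcube _ (cube_e t t01)) i i).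
have pw : forall t : R, 0 <= t <= 1 -> `|f (0 + t *: o) - f (0 + t *: e)| <= Kc * t.
  move=> t t01; have /andP[t0 t1] := t01.
  set p := 0 + t *: e; set d := t *: (o - e).
  have E1 : 0 + t *: o = p + 1 *: d.
    by rewrite /p /d scale1r !add0r scalerBr addrC subrK.
  have := @mv_est_pos R n f p d 1 0 (Kc * t) ler01.
  rewrite E1 mulr0 subr0 normr1 mulr1; apply => s s01.
  have cs := cube_seg t s t01 s01.
  have [dd dv] := DD _ (hcube _ cs) d.
  split => //; rewrite dv subr0.
  have -> : \sum_j d 0 j * hessian g i j (p + s *: d) =
      t * \sum_(j < n | j != i) hessian g i j (p + s *: d).
    rewrite mulr_sumr [RHS]big_mkcond; apply: eq_bigr => j _.
    rewrite /d !mxE /=; case: (eqVneq j i) => [->|ji] /=.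
      by rewrite subrr mulr0 mul0r.
    by rewrite subr0 mulr1.
  by rewrite normrM ger0_norm // mulrC ler_wpM2r // Kb.
have cW : forall h : R -> R, (forall t : R, 0 <= t <= 1 -> {for t, continuous h}) ->
    {within `[0, 1], continuous h}.
  move=> h hc; apply: continuous_in_subspaceT => t; rewrite inE /= in_itv /=; exact: hc.
have ig : forall h : R -> R, (forall t : R, 0 <= t <= 1 -> {for t, continuous h}) ->
    lebesgue_measure.-integrable `[(0:R), 1] (EFin \o h).
  by move=> h hc; apply: continuous_compact_integrable; [exact: segment_compact | exact: cW].
have FTC_G : Rintegral lebesgue_measure `[0, 1] (fun t => f (0 + t *: e)) = g e - g 0.
  rewrite /Rintegral (@continuous_FTC2 R _ (fun t => g (0 + t *: e)) 0 1 ltr01 (cW _ cGp)).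
  - by rewrite /= scale1r scale0r !add0r.
  - have dP : forall t : R, 0 <= t <= 1 ->
        is_derive t 1 (fun t => g (0 + t *: e)) (f (0 + t *: e)).
      move=> t t01; exact: (@line_derive R n g 0 e t (dg _ (hcube _ (cube_e t t01)) i)).
    split.
    + move=> t; rewrite in_itv /= => /andP[t0 t1].
      by case: (dP t); rewrite ?ltW.
    + apply: cvg_at_right_filter.
      apply: (@line_cont R n g 0 e 0 (dg _ (hcube _ (cube_e 0 _)) i)).
      by rewrite lexx ler01.
    + apply: cvg_at_left_filter.
      apply: (@line_cont R n g 0 e 1 (dg _ (hcube _ (cube_e 1 _)) i)).
      by rewrite lexx ler01.
  - move=> t; rewrite in_itv /= => /andP[t0 t1].
    rewrite derive1E.
    have t01 : 0 <= t <= 1 by rewrite !ltW.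
    by case: (@line_derive R n g 0 e t (dg _ (hcube _ (cube_e t t01)) i)).
have FTC_K : Rintegral lebesgue_measure `[0, 1] (fun t => Kc * t) = Kc / 2.
  have dq : forall x : R, is_derive x 1 (fun t : R => Kc / 2 * (t * t)) (Kc * x).
    move=> x.
    have h := is_deriveZ (Kc / 2) (is_deriveM (is_derive_id x (1:R)) (is_derive_id x (1:R))).
    have -> : (fun t : R => Kc / 2 * (t * t)) = (Kc / 2) \*: ((@id R) * (@id R)) by [].
    apply: is_derive_eq.
    rewrite -[_ *: (_ + _)]/(_ * _) [x%:A]mulr1 -mulr2n mulrnAr -mulr_natr mulrAC divfK //.
  have cK : forall t : R, {for t, continuous (fun t : R => Kc * t)}.
    move=> t; apply: deriv_cont1.
    have h := is_deriveZ Kc (is_derive_id t (1:R)).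
    by case: h.
  rewrite /Rintegral (@continuous_FTC2 R _ (fun t : R => Kc / 2 * (t * t)) 0 1 ltr01 (cW (fun t : R => Kc * t) (fun t _ => cK t))).
  - rewrite /=.
    by rewrite mulr1 mulr0 mulr0 subr0 mulr1.
  - split.
    + by move=> t _; case: (dq t).
    + apply: cvg_at_right_filter.
      by case: (dq 0) => dd _; apply: deriv_cont1.
    + apply: cvg_at_left_filter.
      by case: (dq 1) => dd _; apply: deriv_cont1.
  - by move=> t _; rewrite derive1E; case: (dq t).
have -> : (fun t : R => partial i g (t *: ones R n)) = fun t => f (0 + t *: o).
  by apply/funext => t; rewrite add0r.
rewrite -FTC_G -RintegralB //; [|exact: (ig _ cFp)|exact: (ig _ cGp)].
have cD : forall t : R, 0 <= t <= 1 ->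
    {for t, continuous (fun t : R => f (0 + t *: o) - f (0 + t *: e))}.
  by move=> t t01; apply: continuousB; [exact: cFp | exact: cGp].
apply: (le_trans (le_normr_Rintegral _ _)) => //; first exact: ig.
rewrite -FTC_K; apply: le_Rintegral => //.
- by apply: ig => t t01; apply: cvg_norm; exact: cD.
- apply: ig => t _; apply: deriv_cont1.
  by case: (is_deriveZ Kc (is_derive_id t (1:R))).
Qed.
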